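(* Let $\rho\in\{1/2,1\}$, let $s>0$ and $\eta>0$ be real numbers, let $q\in\mathbb{C}$, and let $\epsilon<1$ be real. Define $\ell:(0,\infty)\to\mathbb{R}$ by $$\ell(\gamma) = -\rho\log(1+\gamma s) + \rho\,\frac{|q|^2}{\gamma^{-1}+s} + (\epsilon-1)\log\gamma - \eta\gamma .$$ Then $\ell$ has at most a single local maximum on $(0,\infty)$.
   Context: This function arises in a sparse Bayesian learning scheme: $\rho=1/2$ corresponds to a real signal model and $\rho=1$ to a complex one; $\epsilon$ is the shape parameter and $\eta$ the (positive) rate parameter of a gamma hyperprior; $s=\mathbf{h}^H\mathbf{C}^{-1}\mathbf{h}$ and $q=\mathbf{y}^H\mathbf{C}^{-1}\mathbf{h}$ for a nonzero vector $\mathbf{h}$, a vector $\mathbf{y}$, and a Hermitian positive definite matrix $\mathbf{C}$, so in particular $s>0$. The domain of $\ell$ is $(0,\infty)$. *)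

(* Defs.v *)
From Stdlib Require Import Reals.
From Coquelicot Require Import Coquelicot.
Open Scope R_scope.

Definition ell (rho s eta eps : R) (q : C) (gamma : R) : R :=
  - rho * ln (1 + gamma * s)
  + rho * ((Cmod q) ^ 2 / (/ gamma + s))
  + (eps - 1) * ln gamma
  - eta * gamma.

Definition is_local_max_pos (f : R -> R) (x : R) : Prop :=
  0 < x /\
  exists delta : R, 0 < delta /\
    forall y : R, 0 < y -> Rabs (y - x) < delta -> f y <= f x.

(* Main.v *)
Require Import Defs.
From Stdlib Require Import Reals Lra Psatz.
From Coquelicot Require Import Coquelicot.
Open Scope R_scope.

Definition ld rho s eta eps (q:C) x := - rho * s / (1 + x*s) + rho * (Cmod q ^ 2) / (1+x*s)^2 + (eps-1)/x - eta.

Lemma der rho s eta eps q x : 0 < s -> 0 < x -> derivable_pt_lim (ell rho s eta eps q) x (ld rho s eta eps q x).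
Proof. intros Hs Hx. apply is_derive_Reals. unfold ell, ld.
 assert (Hi : 0 < / x) by (apply Rinv_0_lt_compat; lra).
 auto_derive. repeat split; try lra; try nra.
 field. repeat split; try lra; nra.
Qed.

Definition P rho s eta eps (q:C) x :=
  - rho * s * x * (1 + x*s) + rho * (Cmod q ^ 2) * x + (eps-1)*(1+x*s)^2 - eta*x*(1+x*s)^2.

Lemma ldP rho s eta eps q x : 0 < s -> 0 < x -> ld rho s eta eps q x * (x*(1+x*s)^2) = P rho s eta eps q x.
Proof. intros. unfold ld, P. field. split; nra. Qed.

Lemma locmax_zero rho s eta eps q g : 0 < s -> is_local_max_pos (ell rho s eta eps q) g ->
  ld rho s eta eps q g = 0.
Proof.
  intros Hs [Hg [d [Hd H]]].
  set (pr := exist (fun l => derivable_pt_lim (ell rho s eta eps q) g l) _ (der rho s eta eps q g Hs Hg)).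
  change (derive_pt (ell rho s eta eps q) g pr = 0).
  set (m := Rmin d g).
  assert (Hm1 : m <= d) by apply Rmin_l. assert (Hm2 : m <= g) by apply Rmin_r.
  assert (Hm : 0 < m) by (unfold m; apply Rmin_pos; lra).
  apply (deriv_maximum _ (g - m) (g + m)); try lra.
  intros x H1 H2. apply H; try lra. apply Rabs_def1; lra.
Qed.

Lemma P_factor rho s eta eps q g1 g2 x :
  (g2 - g1) * (P rho s eta eps q x - (x-g1)*(x-g2)*((-eta*s^2)*(x+g1+g2) + (-rho*s^2 + (eps-1)*s^2 - 2*eta*s)))
  = (g2 - x) * P rho s eta eps q g1 + (x - g1) * P rho s eta eps q g2.
Proof. unfold P. ring. Qed.

Lemma ld_pos rho s eta eps q g1 g2 x : 0 <= rho -> 0 < s -> 0 < eta -> eps < 1 ->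
  0 < g1 -> g1 < x -> x < g2 ->
  ld rho s eta eps q g1 = 0 -> ld rho s eta eps q g2 = 0 -> 0 < ld rho s eta eps q x.
Proof.
  intros Hr Hs He Hep H1 Hx1 Hx2 L1 L2.
  assert (P1 : P rho s eta eps q g1 = 0) by (rewrite <- ldP by lra; rewrite L1; ring).
  assert (P2 : P rho s eta eps q g2 = 0) by (rewrite <- ldP by lra; rewrite L2; ring).
  pose proof (P_factor rho s eta eps q g1 g2 x) as F. rewrite P1, P2 in F.
  assert (Hc : (-eta*s^2)*(x+g1+g2) + (-rho*s^2 + (eps-1)*s^2 - 2*eta*s) < 0).
  { assert (0 < eta*s^2*(x+g1+g2)) by (apply Rmult_lt_0_compat; [apply Rmult_lt_0_compat; nra | lra]).
    assert (0 <= rho*s^2) by (apply Rmult_le_pos; nra).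
    assert ((eps-1)*s^2 < 0) by (apply Rmult_neg_pos; nra).
    assert (0 < eta*s) by nra. lra. }
  assert (Hpos : 0 < (x-g1)*(x-g2)*((-eta*s^2)*(x+g1+g2) + (-rho*s^2 + (eps-1)*s^2 - 2*eta*s))).
  { rewrite Rmult_assoc. apply Rmult_lt_0_compat; [lra|]. nra. }
  assert (HP : P rho s eta eps q x = (x-g1)*(x-g2)*((-eta*s^2)*(x+g1+g2) + (-rho*s^2 + (eps-1)*s^2 - 2*eta*s))).
  { apply Rmult_eq_reg_l with (g2 - g1); [|lra]. lra. }
  rewrite <- ldP in HP by lra.
  assert (0 < x * (1 + x*s)^2) by (apply Rmult_lt_0_compat; [lra|]; nra).
  nra.
Qed.

Lemma not_two rho s eta eps q g1 g2 : 0 <= rho -> 0 < s -> 0 < eta -> eps < 1 -> g1 < g2 ->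
  is_local_max_pos (ell rho s eta eps q) g1 ->
  is_local_max_pos (ell rho s eta eps q) g2 -> False.
Proof.
  intros Hr Hs He Hep Hlt M1 M2.
  pose proof (locmax_zero _ _ _ _ _ _ Hs M1) as L1.
  pose proof (locmax_zero _ _ _ _ _ _ Hs M2) as L2.
  destruct M1 as [Hg1 [d [Hd H]]]. destruct M2 as [Hg2 _].
  set (m := Rmin d (g2 - g1)).
  assert (Hm1 : m <= d) by apply Rmin_l. assert (Hm2 : m <= g2 - g1) by apply Rmin_r.
  assert (Hm : 0 < m) by (unfold m; apply Rmin_pos; lra).
  set (y := g1 + m/2).
  destruct (MVT_cor2 (ell rho s eta eps q) (ld rho s eta eps q) g1 y) as [c [Hc1 Hc2]].
  - unfold y; lra.
  - intros c Hc. apply der; auto; lra.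
  - assert (0 < ld rho s eta eps q c) by (apply (ld_pos _ _ _ _ _ g1 g2); auto; unfold y in *; lra).
    assert (ell rho s eta eps q y <= ell rho s eta eps q g1).
    { apply H. unfold y; lra. apply Rabs_def1; unfold y; lra. }
    assert (0 < ld rho s eta eps q c * (y - g1)) by (apply Rmult_lt_0_compat; unfold y; lra).
    lra.
Qed.

Theorem proposition1 (rho s eta eps : R) (q : C) :
  (rho = 1 / 2 \/ rho = 1) -> 0 < s -> 0 < eta -> eps < 1 ->
  forall g1 g2 : R,
    is_local_max_pos (ell rho s eta eps q) g1 ->
    is_local_max_pos (ell rho s eta eps q) g2 ->
    g1 = g2.
Proof.
  intros Hr Hs He Hep g1 g2 M1 M2.
  assert (0 <= rho) by lra.
  destruct (Rtotal_order g1 g2) as [Hl|[Heq|Hg]]; auto.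
  - exfalso; exact (not_two _ _ _ _ _ _ _ H Hs He Hep Hl M1 M2).
  - exfalso; exact (not_two _ _ _ _ _ _ _ H Hs He Hep Hg M2 M1).
Qed.
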